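(* Let $\mathcal{R}$ be a right amenable cell space with finite stabiliser $G_0$, let $(\mathcal{R},Q,N,\delta)$ be a semi-cellular automaton with $Q$ finite and nonempty and $N$ finite, whose global transition function is $\Delta$, and let $\mathcal{F}=(F_i)_{i\in I}$ be a right Følner net in $\mathcal{R}$. If $\mathrm{h}_{\mathcal{F}}(\Delta(Q^M))<\log|Q|$, then $\Delta$ is not pre-injective.
   Context: A cell space $\mathcal{R}$ consists of a group $G$ acting transitively on the left on a nonempty set $M$ via $\triangleright$, a point $m_0\in M$ and a family $(g_{m_0,m})_{m\in M}$ in $G$ with $g_{m_0,m}\triangleright m_0=m$. $G_0$ is the stabiliser of $m_0$, $G/G_0$ the set of left cosets, with $G$ acting by $g\cdot hG_0=ghG_0$. The right semi-action $\triangleleft\colon M\times G/G_0\to M$ is $m\triangleleft gG_0=g_{m_0,m}g\triangleright m_0$. $\mathcal{R}$ is right amenable if there is a finitely additive probability measure $\mu$ on the power set of $M$ such that $\mu(\{a\triangleleft\mathfrak{g}:a\in A\})=\mu(A)$ whenever $\mathfrak{g}\in G/G_0$, $A\subseteq M$ and $m\mapsto m\triangleleft\mathfrak{g}$ is injective on $A$. A right Følner net in $\mathcal{R}$ is a net $(F_i)_{i\in I}$ (over a directed set) of nonempty finite subsets of $M$ with $\lim_{i}\frac{|F_i\setminus\{m: m\triangleleft\mathfrak{g}\in F_i\}|}{|F_i|}=0$ for every $\mathfrak{g}\in G/G_0$. A semi-cellular automaton is $(\mathcal{R},Q,N,\delta)$ with $Q$ a set, $N\subseteq G/G_0$ with $G_0\cdot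 N\subseteq N$, $\delta\colon Q^N\to Q$; its global transition function is $\Delta(c)(m)=\delta(n\mapsto c(m\triangleleft n))$. For $A\subseteq M$, $\pi_A\colon Q^M\to Q^A$ is restriction; $\mathrm{h}_{\mathcal{F}}(X)=\limsup_{i\in I}\frac{\log|\pi_{F_i}(X)|}{|F_i|}$ for $X\subseteq Q^M$. $\Delta$ is pre-injective if for all $c,c'\in Q^M$ such that $\{m: c(m)\neq c'(m)\}$ is finite and $\Delta(c)=\Delta(c')$ we have $c=c'$. *)

(* Defs.v *)
From Stdlib Require Import Reals List Classical ClassicalEpsilon.
From Coquelicot Require Import Coquelicot.
Set Implicit Arguments.
Open Scope R_scope.

Record group := Group {
  gcar :> Type;
  gmul : gcar -> gcar -> gcar;
  gone : gcar;
  ginv : gcar -> gcar;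
  gmulA : forall x y z, gmul x (gmul y z) = gmul (gmul x y) z;
  gmul1g : forall x, gmul gone x = x;
  gmulVg : forall x, gmul (ginv x) x = gone
}.

Record cell_space := CellSpace {
  cs_G : group;
  cs_M : Type;
  cs_act : cs_G -> cs_M -> cs_M;
  cs_act1 : forall m, cs_act (gone cs_G) m = m;
  cs_actM : forall g h m, cs_act (gmul cs_G g h) m = cs_act g (cs_act h m);
  cs_transitive : forall m m', exists g, cs_act g m = m';
  cs_m0 : cs_M;
  cs_gfam : cs_M -> cs_G;
  cs_gfamP : forall m, cs_act (cs_gfam m) cs_m0 = m
}.

Section CellSpaceDefs.
Variable CS : cell_space.
Local Notation G := (cs_G CS).
Local Notation M := (cs_M CS).
Local Notation act := (cs_act CS).
Local Notation m0 := (cs_m0 CS).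

Definition stab (g : G) : Prop := act g m0 = m0.

Definition is_coset (S : G -> Prop) : Prop :=
  exists g, forall h, S h <-> exists k, stab k /\ h = gmul G g k.
Definition coset := { S : G -> Prop | is_coset S }.

Lemma coset_of_proof (g : G) :
  is_coset (fun h => exists k, stab k /\ h = gmul G g k).
Proof. exists g; intro h; tauto. Qed.

Definition coset_of (g : G) : coset := exist _ _ (coset_of_proof g).

Definition coset_rep (c : coset) : G :=
  proj1_sig (constructive_indefinite_description _ (proj2_sig c)).

Definition coset_lmul (g : G) (c : coset) : coset := coset_of (gmul G g (coset_rep c)).

(* right semi-action  m <| gG_0 = g_{m0,m} g |> m0 *)
Definition rsemi (m : M) (c : coset) : M := act (gmul G (cs_gfam CS m) (coset_rep c)) m0.

Definition finite_stabiliser : Prop := exists l : list G, forall g, stab g -> In g l.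

Definition right_amenable : Prop :=
  exists mu : (M -> Prop) -> R,
    (forall A, 0 <= mu A) /\
    mu (fun _ => True) = 1 /\
    (forall A B, (forall m, A m -> B m -> False) ->
        mu (fun m => A m \/ B m) = mu A + mu B) /\
    (forall (c : coset) (A : M -> Prop),
        (forall a a', A a -> A a' -> rsemi a c = rsemi a' c -> a = a') ->
        mu (fun m => exists a, A a /\ m = rsemi a c) = mu A).
End CellSpaceDefs.

Definition has_card {X : Type} (S : X -> Prop) (n : nat) : Prop :=
  exists l : list X, NoDup l /\ (forall x, In x l <-> S x) /\ length l = n.

Definition finite_set {X : Type} (S : X -> Prop) : Prop := exists n, has_card S n.

(* cardinality of a finite set (0 for infinite sets; only used on finite ones) *)
Definition fcard {X : Type} (S : X -> Prop) : nat :=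
  match excluded_middle_informative (finite_set S) with
  | left H => proj1_sig (constructive_indefinite_description _ H)
  | right _ => 0%nat
  end.

Record directed_set := DirectedSet {
  ds_I :> Type;
  ds_le : ds_I -> ds_I -> Prop;
  ds_refl : forall i, ds_le i i;
  ds_trans : forall i j k, ds_le i j -> ds_le j k -> ds_le i k;
  ds_inhabited : inhabited ds_I;
  ds_directed : forall i j, exists k, ds_le i k /\ ds_le j k
}.

Definition net_tends_to {I : directed_set} (x : I -> R) (l : R) : Prop :=
  forall eps, 0 < eps -> exists i0, forall i, ds_le I i0 i -> Rabs (x i - l) < eps.

Definition net_limsup {I : directed_set} (x : I -> R) : Rbar :=
  Rbar_glb (fun y => exists i0, y = Lub_Rbar (fun r => exists i, ds_le I i0 i /\ r = x i)).

Definition right_folner_net (CS : cell_space) (I : directed_set)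
    (F : I -> cs_M CS -> Prop) : Prop :=
  (forall i, finite_set (F i) /\ exists m, F i m) /\
  forall c : coset CS,
    net_tends_to
      (fun i => INR (fcard (fun m => F i m /\ ~ F i (rsemi m c))) / INR (fcard (F i))) 0.

Definition restrict {M Q : Type} (A : M -> Prop) (c : M -> Q) : {m | A m} -> Q :=
  fun x => c (proj1_sig x).

Definition proj_set {M Q : Type} (A : M -> Prop) (X : (M -> Q) -> Prop)
  : ({m | A m} -> Q) -> Prop :=
  fun p => exists c, X c /\ p = restrict A c.

Definition entropy {M Q : Type} {I : directed_set} (F : I -> M -> Prop)
    (X : (M -> Q) -> Prop) : Rbar :=
  net_limsup (fun i => ln (INR (fcard (proj_set (F i) X))) / INR (fcard (F i))).

Definition nbhd_ok (CS : cell_space) (N : coset CS -> Prop) : Prop :=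
  forall k n, stab CS k -> N n -> N (coset_lmul k n).

Definition global_transition (CS : cell_space) (Q : Type) (N : coset CS -> Prop)
    (delta : ({n | N n} -> Q) -> Q) (c : cs_M CS -> Q) : cs_M CS -> Q :=
  fun m => delta (fun n => c (rsemi m (proj1_sig n))).

Definition pre_injective {M Q : Type} (Delta : (M -> Q) -> (M -> Q)) : Prop :=
  forall c c' : M -> Q, finite_set (fun m => c m <> c' m) ->
    Delta c = Delta c' -> c = c'.

(* Main.v *)
Require Import Defs.
From Stdlib Require Import Reals List Classical ClassicalEpsilon ProofIrrelevance FunctionalExtensionality Lia Lra.
From Coquelicot Require Import Coquelicot.
Open Scope R_scope.

Lemma inj_card_rel {X Y : Type} (l : list Y) : forall (S : X -> Prop) (Rl : X -> Y -> Prop),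
  (forall x, S x -> exists y, In y l /\ Rl x y) ->
  (forall x x' y, S x -> S x' -> Rl x y -> Rl x' y -> x = x') ->
  exists lS, NoDup lS /\ (forall x, In x lS <-> S x) /\ (length lS <= length l)%nat.
Proof.
  induction l as [|y l IH]; intros S Rl Hex Hinj.
  - exists nil; split; [constructor|split; [|simpl; lia]].
    intro x; split; [intros []|intro Hx; destruct (Hex x Hx) as [y [[] _]]].
  - destruct (classic (exists x0, S x0 /\ Rl x0 y)) as [[x0 [Hx0 Rx0]]|Hno].
    + destruct (IH (fun x => S x /\ x <> x0) Rl) as [lS [Hnd [Hin Hlen]]].
      * intros x [Hx Hne]. destruct (Hex x Hx) as [y' [[<-|Hy'] Ry']].
        -- exfalso; apply Hne; eapply Hinj; eauto.
        -- eauto.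
      * intros x x' y'' [Hx1 _] [Hx2 _] R1 R2; exact (Hinj x x' y'' Hx1 Hx2 R1 R2).
      * exists (x0 :: lS); split; [constructor; [intro H; apply Hin in H; tauto|exact Hnd]|split].
        -- intro x; simpl; rewrite Hin; split.
           ++ intros [<-|[]]; auto.
           ++ intro Hx; destruct (classic (x = x0)); auto.
        -- simpl; lia.
    + destruct (IH S Rl) as [lS [Hnd [Hin Hlen]]].
      * intros x Hx. destruct (Hex x Hx) as [y' [[<-|Hy'] Ry']].
        -- exfalso; apply Hno; eauto.
        -- eauto.
      * exact Hinj.
      * exists lS; split; [exact Hnd|split; [exact Hin|simpl; lia]].
Qed.

Lemma nodup_same_length {X : Type} (l1 l2 : list X) :
  NoDup l1 -> NoDup l2 -> (forall x, In x l1 <-> In x l2) -> length l1 = length l2.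
Proof.
  intros H1 H2 H. apply Nat.le_antisymm; apply NoDup_incl_length; auto; intros x; apply H.
Qed.

Lemma fcard_spec {X : Type} (S : X -> Prop) n : has_card S n -> fcard S = n.
Proof.
  intro Hc. unfold fcard. destruct excluded_middle_informative as [Hf|Hf].
  - destruct constructive_indefinite_description as [m [l [Hn [Hi Hl]]]]; simpl.
    destruct Hc as [l' [Hn' [Hi' Hl']]]. subst.
    apply nodup_same_length; [exact Hn|exact Hn'|]. intro x; rewrite Hi, Hi'; tauto.
  - exfalso; apply Hf; eexists; exact Hc.
Qed.

Definition fenum {X : Type} (S : X -> Prop) : list X :=
  match excluded_middle_informative (exists l, NoDup l /\ forall x, In x l <-> S x) with
  | left H => proj1_sig (constructive_indefinite_description _ H)
  | right _ => nil
  end.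

Lemma fenum_spec {X : Type} (S : X -> Prop) : finite_set S ->
  NoDup (fenum S) /\ (forall x, In x (fenum S) <-> S x) /\ length (fenum S) = fcard S.
Proof.
  intros [n [l [Hn [Hi Hl]]]]. unfold fenum. destruct excluded_middle_informative as [H|H].
  - destruct constructive_indefinite_description as [l' [Hn' Hi']]; simpl.
    repeat split; auto; try apply Hi'.
    symmetry; apply fcard_spec. exists l'; auto.
  - exfalso; apply H; eauto.
Qed.

Lemma finite_sub {X : Type} (S T : X -> Prop) : finite_set T -> (forall x, S x -> T x) -> finite_set S.
Proof.
  intros [n [l [Hn [Hi _]]]] Hs.
  exists (length (filter (fun x => if excluded_middle_informative (S x) then true else false) l)).
  eexists; split; [apply NoDup_filter; exact Hn|split; [|reflexivity]].
  intro x; rewrite filter_In; destruct excluded_middle_informative; split; intuition; try discriminate.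
  apply Hi; auto.
Qed.

Lemma card_of_list {X : Type} (S : X -> Prop) lS : NoDup lS -> (forall x, In x lS <-> S x) ->
  finite_set S /\ fcard S = length lS.
Proof.
  intros. assert (has_card S (length lS)) by (exists lS; auto).
  split; [eexists; eauto|apply fcard_spec; auto].
Qed.

Fixpoint words {Q : Type} (lQ : list Q) (k : nat) : list (list Q) :=
  match k with
  | O => nil :: nil
  | S k => flat_map (fun a => map (cons a) (words lQ k)) lQ
  end.

Lemma words_in {Q : Type} (lQ : list Q) (HQ : forall a, In a lQ) k w :
  In w (words lQ k) <-> length w = k.
Proof.
  revert w; induction k; intro w; simpl.
  - destruct w; simpl; split; intuition; discriminate.
  - rewrite in_flat_map. split.
    + intros [a [_ Ha]]. apply in_map_iff in Ha. destruct Ha as [w' [<- Hw]].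
      apply IHk in Hw. simpl; lia.
    + intro H; destruct w as [|a w]; [discriminate|]. simpl in H. exists a; split; auto.
      apply in_map. apply IHk. lia.
Qed.

Lemma list_sum_const {A : Type} (l : list A) c : list_sum (map (fun _ => c) l) = (length l * c)%nat.
Proof. induction l; simpl; auto; lia. Qed.

Lemma words_length {Q : Type} (lQ : list Q) k : length (words lQ k) = (length lQ ^ k)%nat.
Proof.
  induction k; simpl; auto.
  rewrite length_flat_map.
  rewrite (map_ext _ (fun _ => length (words lQ k))) by (intro; apply length_map).
  rewrite list_sum_const, IHk. lia.
Qed.

Lemma flat_cons_nodup {Q : Type} (L : list (list Q)) (HL : NoDup L) (l : list Q) :
  NoDup l -> NoDup (flat_map (fun a => map (cons a) L) l).
Proof.
  induction 1 as [|a l Ha Hl IH]; simpl; [constructor|].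
  apply NoDup_app.
  - apply NoDup_map_NoDup_ForallPairs; auto. intros x y _ _ H; injection H; auto.
  - exact IH.
  - intros w Hw Hw'. apply in_map_iff in Hw. destruct Hw as [w0 [<- _]].
    apply in_flat_map in Hw'. destruct Hw' as [b [Hb Hw']]. apply in_map_iff in Hw'.
    destruct Hw' as [w1 [E _]]. injection E; intros; subst; auto.
Qed.

Lemma words_nodup {Q : Type} (lQ : list Q) (HQ : NoDup lQ) k : NoDup (words lQ k).
Proof.
  induction k; simpl; [repeat constructor; intros []|].
  apply flat_cons_nodup; auto.
Qed.

Definition lsig {X : Type} (S : X -> Prop) : list {m | S m} :=
  flat_map (fun m => match excluded_middle_informative (S m) with
                     | left H => exist _ m H :: nil | right _ => nil end) (fenum S).

Lemma lsig_spec {X : Type} (S : X -> Prop) : finite_set S ->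
  (forall x, In x (lsig S)) /\ length (lsig S) = fcard S.
Proof.
  intro Hf. destruct (@fenum_spec _ S Hf) as [Hn [Hi Hl]]. unfold lsig. split.
  - intros [m Hm]. apply in_flat_map. exists m; split; [apply Hi; auto|].
    destruct excluded_middle_informative as [H|H]; [|tauto].
    left; f_equal; apply proof_irrelevance.
  - rewrite <- Hl. assert (forall x, In x (fenum S) -> S x) as Hall by (intro; apply Hi).
    clear Hn Hi Hl. induction (fenum S) as [|a l IH]; simpl; auto.
    destruct excluded_middle_informative as [H|H]; simpl.
    + f_equal; apply IH; intros; apply Hall; simpl; auto.
    + exfalso; apply H; apply Hall; simpl; auto.
Qed.

Lemma pattern_card {M Q : Type} (lQ : list Q) (HQ : forall a, In a lQ)
  (A : M -> Prop) (HA : finite_set A) (P : ({m | A m} -> Q) -> Prop) :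
  finite_set P /\ (fcard P <= length lQ ^ fcard A)%nat.
Proof.
  destruct (@lsig_spec _ A HA) as [Hin Hlen].
  destruct (inj_card_rel (words lQ (fcard A)) P (fun p w => w = map p (lsig A))) as [lP [Hn [Hi Hl]]].
  - intros p _. eexists; split; [|reflexivity]. apply words_in; auto. rewrite length_map; auto.
  - intros p p' w _ _ -> E. apply functional_extensionality; intro x.
    assert (In x (lsig A)) as Hx by auto. clear Hin Hlen. induction (lsig A); [destruct Hx|].
    simpl in E; injection E; intros; destruct Hx as [<-|]; auto.
  - destruct (card_of_list P lP Hn Hi) as [Hf Hc]. split; auto. rewrite Hc.
    rewrite words_length in Hl; auto.
Qed.

Section Grp.
Variable G : group.
Lemma mulgV (x : G) : gmul G x (ginv G x) = gone G.
Proof.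
  set (y := gmul G x (ginv G x)).
  rewrite <- (gmul1g G y). rewrite <- (gmulVg G y) at 1.
  rewrite <- gmulA. unfold y at 2 3.
  rewrite <- (gmulA G x (ginv G x)), (gmulA G (ginv G x) x), gmulVg, gmul1g.
  apply gmulVg.
Qed.
Lemma mulg1 (x : G) : gmul G x (gone G) = x.
Proof. rewrite <- (gmulVg G x), gmulA, mulgV, gmul1g; auto. Qed.
Lemma mulKg (x y : G) : gmul G (ginv G x) (gmul G x y) = y.
Proof. rewrite gmulA, gmulVg, gmul1g; auto. Qed.
Lemma mulKVg (x y : G) : gmul G x (gmul G (ginv G x) y) = y.
Proof. rewrite gmulA, mulgV, gmul1g; auto. Qed.
End Grp.

Section CS.
Variable CS : cell_space.
Local Notation G := (cs_G CS).
Local Notation act := (cs_act CS).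
Local Notation m0 := (cs_m0 CS).

Lemma rep_spec (x : G) : exists k, stab CS k /\ coset_rep (coset_of CS x) = gmul G x k.
Proof.
  unfold coset_rep. destruct constructive_indefinite_description as [r Hr]; simpl.
  simpl in Hr. destruct (proj2 (Hr r)) as [k [Hk E]].
  - exists (gone G); split; [unfold stab; apply cs_act1|]. symmetry; apply mulg1.
  - eauto.
Qed.

Lemma act_stab g k : stab CS k -> act (gmul G g k) m0 = act g m0.
Proof. intro H; rewrite cs_actM, H; auto. Qed.

Lemma back (lG0 : list G) (HG0 : forall g, stab CS g -> In g lG0) (m : cs_M CS) (n : coset CS) :
  exists k, In k lG0 /\
   rsemi (rsemi m n) (coset_of CS (gmul G (ginv G k) (ginv G (coset_rep n)))) = m.
Proof.
  set (g := coset_rep n). set (h := cs_gfam CS m).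
  set (m' := rsemi m n). set (h' := cs_gfam CS m').
  set (k := gmul G (ginv G (gmul G h g)) h').
  assert (Hk : stab CS k).
  { unfold stab, k. rewrite cs_actM. unfold h'. rewrite cs_gfamP.
    unfold m', rsemi. fold g h. rewrite <- cs_actM, gmulVg. apply cs_act1. }
  exists k; split; auto.
  destruct (rep_spec (gmul G (ginv G k) (ginv G g))) as [k2 [Hk2 E]].
  unfold rsemi at 1. fold m' h'. rewrite E, gmulA, act_stab by auto.
  assert (Hh' : h' = gmul G (gmul G h g) k) by (unfold k; rewrite mulKVg; auto).
  rewrite Hh'. rewrite <- (gmulA G (gmul G h g) k), mulKVg.
  rewrite <- gmulA, mulgV, mulg1. apply cs_gfamP.
Qed.
End CS.

Fixpoint look {M Q : Type} (q0 : Q) (l : list M) (w : list Q) (m : M) : Q :=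
  match l, w with
  | a :: l', b :: w' => if excluded_middle_informative (a = m) then b else look q0 l' w' m
  | _, _ => q0
  end.

Lemma look_out {M Q : Type} (q0 : Q) l w (m : M) : ~ In m l -> look q0 l w m = q0.
Proof.
  revert w; induction l as [|a l IH]; intros w H; simpl; auto.
  destruct w; auto. destruct excluded_middle_informative; [exfalso; apply H; simpl; auto|].
  apply IH; intro; apply H; simpl; auto.
Qed.

Lemma look_map {M Q : Type} (q0 : Q) (l : list M) : NoDup l -> forall w,
  length w = length l -> map (look q0 l w) l = w.
Proof.
  induction 1 as [|a l Ha Hl IH]; intros w Hw; simpl.
  - destruct w; simpl in *; auto; discriminate.
  - destruct w as [|b w]; [discriminate|]. simpl in Hw.
    destruct excluded_middle_informative as [_|C]; [|tauto]. f_equal.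
    transitivity (map (look q0 l w) l); [|apply IH; lia]. apply map_ext_in. intros x Hx.
    destruct excluded_middle_informative; auto. subst; tauto.
Qed.

Section Count.
Variable CS : cell_space.
Local Notation M := (cs_M CS).
Variable Q : Type.
Variable lQ : list Q.
Hypothesis HlQ : forall a, In a lQ.
Hypothesis HlQnd : NoDup lQ.
Variable q0 : Q.
Variable N : coset CS -> Prop.
Variable delta : ({n | N n} -> Q) -> Q.
Local Notation Delta := (global_transition N delta).
Hypothesis Hpre : pre_injective Delta.
Variable lN' : list (coset CS).
Hypothesis HlN' : forall m n, N n -> exists c, In c lN' /\ rsemi (rsemi m n) c = m.
Variable F0 : M -> Prop.
Hypothesis HF0 : finite_set F0.

Definition Xim : (M -> Q) -> Prop := fun d => exists c, d = Delta c.
Definition Dset : M -> Prop := fun m => ~ F0 m /\ exists n, N n /\ F0 (rsemi m n).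
Definition Eset (c : coset CS) : M -> Prop := fun m => F0 m /\ ~ F0 (rsemi m c).

Lemma locality (c c' : M -> Q) : (forall m, ~ F0 m -> c m = c' m) ->
  restrict F0 (Delta c) = restrict F0 (Delta c') ->
  restrict Dset (Delta c) = restrict Dset (Delta c') -> Delta c = Delta c'.
Proof.
  intros Hout H1 H2. apply functional_extensionality; intro m.
  destruct (classic (F0 m)) as [Hm|Hm].
  { exact (equal_f H1 (exist _ m Hm)). }
  destruct (classic (exists n, N n /\ F0 (rsemi m n))) as [Hn|Hn].
  { exact (equal_f H2 (exist _ m (conj Hm Hn))). }
  unfold global_transition. f_equal. apply functional_extensionality; intros [n Hn']; simpl.
  apply Hout. intro C; apply Hn; eauto.
Qed.

Lemma Dset_bound : finite_set Dset /\
  (fcard Dset <= list_sum (map (fun c => fcard (Eset c)) lN'))%nat.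
Proof.
  assert (HE : forall c, finite_set (Eset c)) by (intro c; apply (finite_sub _ F0 HF0); intros m []; auto).
  destruct (inj_card_rel (flat_map (fun c => map (fun m' => (m', c)) (fenum (Eset c))) lN') Dset
             (fun m p => m = rsemi (fst p) (snd p))) as [lD [Hn [Hi Hl]]].
  - intros m [Hm [n [Hn HFn]]]. destruct (HlN' m n Hn) as [c [Hc E]].
    exists (rsemi m n, c); split; [|simpl; auto].
    apply in_flat_map; exists c; split; auto. apply in_map_iff; exists (rsemi m n); split; [reflexivity|].
    apply (@fenum_spec _ (Eset c) (HE c)). split; auto. rewrite E; auto.
  - intros x x' y _ _ -> ->; auto.
  - destruct (card_of_list _ _ Hn Hi) as [Hf Hc]. split; auto. rewrite Hc.
    rewrite length_flat_map in Hl. eapply Nat.le_trans; [exact Hl|].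
    apply Nat.eq_le_incl. f_equal. apply map_ext_in. intros c _. rewrite length_map.
    apply (@fenum_spec _ (Eset c) (HE c)).
Qed.

Lemma main_count : finite_set (proj_set F0 Xim) /\
  (length lQ ^ fcard F0 <= fcard (proj_set F0 Xim) *
     length lQ ^ (list_sum (map (fun c => fcard (Eset c)) lN')))%nat.
Proof.
  destruct Dset_bound as [HD HDc].
  destruct (pattern_card lQ HlQ F0 HF0 (proj_set F0 Xim)) as [HPF _].
  destruct (pattern_card lQ HlQ Dset HD (proj_set Dset Xim)) as [HPD HPDc].
  split; auto.
  destruct (@fenum_spec _ F0 HF0) as [HFn [HFi HFl]].
  destruct (@fenum_spec _ _ HPF) as [HPFn [HPFi HPFl]].
  destruct (@fenum_spec _ _ HPD) as [HPDn [HPDi HPDl]].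
  set (lF := fenum F0) in *.
  destruct (inj_card_rel (list_prod (fenum (proj_set F0 Xim)) (fenum (proj_set Dset Xim)))
     (fun w => In w (words lQ (fcard F0)))
     (fun w p => fst p = restrict F0 (Delta (look q0 lF w)) /\ snd p = restrict Dset (Delta (look q0 lF w))))
     as [lS [Hn [Hi Hl]]].
  - intros w _. exists (restrict F0 (Delta (look q0 lF w)), restrict Dset (Delta (look q0 lF w))).
    split; [|split; reflexivity].
    apply in_prod_iff; split; [apply HPFi|apply HPDi]; exists (Delta (look q0 lF w)); split; try reflexivity;
    exists (look q0 lF w); reflexivity.
  - intros w w' [p1 p2] Hw Hw' [E1 E2] [E1' E2']; simpl in *.
    apply words_in in Hw; auto. apply words_in in Hw'; auto.
    assert (Heq : look q0 lF w = look q0 lF w').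
    { apply Hpre.
      - apply (finite_sub _ F0 HF0). intros m Hm. apply NNPP; intro C. apply Hm.
        rewrite !look_out; auto; intro Hin; apply C, HFi; auto.
      - apply locality; [|congruence|congruence].
        intros m Hm. rewrite !look_out; auto; intro Hin; apply Hm, HFi; auto. }
    rewrite <- (look_map q0 lF HFn w) by lia. rewrite <- (look_map q0 lF HFn w') by lia.
    rewrite Heq; auto.
  - rewrite length_prod, HPFl, HPDl in Hl.
    assert (length lS = length (words lQ (fcard F0))) as E.
    { apply nodup_same_length; auto. apply words_nodup; auto. }
    rewrite E, words_length in Hl.
    eapply Nat.le_trans; [exact Hl|]. apply Nat.mul_le_mono_l.
    eapply Nat.le_trans; [exact HPDc|]. apply Nat.pow_le_mono_r; auto.
    destruct lQ as [|a l]; [destruct (HlQ q0)|simpl; lia].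
Qed.
End Count.

Lemma sum_small {I : directed_set} {C : Type} (l : list C) (f : I -> C -> nat) (d : I -> nat) :
  (forall c, In c l -> net_tends_to (fun i => INR (f i c) / INR (d i)) 0) ->
  forall eps, 0 < eps -> exists i0, forall i, ds_le I i0 i ->
    INR (list_sum (map (f i) l)) / INR (d i) < eps.
Proof.
  induction l as [|c l IH]; intros H eps Heps.
  - destruct (ds_inhabited I) as [i0]. exists i0; intros i _. simpl. unfold Rdiv; rewrite Rmult_0_l; auto.
  - destruct (H c (or_introl eq_refl) (eps/2)) as [i1 H1]; [lra|].
    destruct (IH (fun c' h => H c' (or_intror h)) (eps/2)) as [i2 H2]; [lra|].
    destruct (ds_directed I i1 i2) as [i0 [Hi1 Hi2]]. exists i0; intros i Hi.
    specialize (H1 i (ds_trans _ _ _ _ Hi1 Hi)). specialize (H2 i (ds_trans _ _ _ _ Hi2 Hi)).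
    simpl. rewrite plus_INR. unfold Rdiv in *. rewrite Rmult_plus_distr_r.
    rewrite Rminus_0_r in H1. apply Rabs_def2 in H1. lra.
Qed.

Lemma rbar_ge (L : R) (y : Rbar) :
  (forall eps, 0 < eps -> exists r, Rbar_le (Finite r) y /\ L - eps < r) -> Rbar_le (Finite L) y.
Proof.
  intro H. destruct y as [z| |]; simpl; auto.
  - destruct (Rle_lt_dec L z) as [h|h]; auto.
    destruct (H (L - z)) as [r [Hr Hr']]; [lra|]. simpl in Hr. lra.
  - destruct (H 1) as [r [Hr _]]; [lra|]. destruct Hr.
Qed.

Theorem theorem5
  (CS : cell_space)
  (HG0 : finite_stabiliser CS)
  (Hamen : right_amenable CS)
  (Q : Type) (HQfin : finite_set (fun _ : Q => True)) (HQne : inhabited Q)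
  (N : coset CS -> Prop) (HN : nbhd_ok N) (HNfin : finite_set N)
  (delta : ({n | N n} -> Q) -> Q)
  (I : directed_set) (F : I -> cs_M CS -> Prop)
  (HF : right_folner_net CS I F) :
  Rbar_lt
    (entropy F (fun d => exists c : cs_M CS -> Q, d = global_transition N delta c))
    (Finite (ln (INR (fcard (fun _ : Q => True))))) ->
  ~ pre_injective (global_transition N delta).
Proof.
  intros Hlt Hpre.
  destruct HG0 as [lG0 HlG0].
  destruct HNfin as [nN [lN [_ [HlN _]]]].
  destruct (@fenum_spec _ _ HQfin) as [HQn [HQi HQl]].
  set (lQ := fenum (fun _ : Q => True)) in *. clearbody lQ.
  destruct HQne as [q0].
  destruct HF as [HFfin HFol].
  set (lN' := flat_map (fun n => map (fun k => coset_of CS (gmul _ (ginv _ k) (ginv _ (coset_rep n)))) lG0) lN).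
  assert (HlN' : forall m n, N n -> exists c, In c lN' /\ rsemi (rsemi m n) c = m).
  { intros m n Hn. destruct (back CS lG0 HlG0 m n) as [k [Hk E]].
    eexists; split; [|exact E]. apply in_flat_map; exists n; split; [apply HlN; auto|].
    apply in_map_iff; eexists; split; [reflexivity|auto]. }
  assert (HlQ : forall a, In a lQ) by (intro; apply HQi; auto).
  set (q := length lQ) in *.
  assert (Hq : (1 <= q)%nat) by (unfold q; destruct lQ; [destruct (HlQ q0)|simpl; lia]).
  set (L := ln (INR q)).
  assert (HL : 0 <= L) by (unfold L; rewrite <- ln_1; apply ln_le; [lra|apply (le_INR 1); auto]).
  set (x := fun i => ln (INR (fcard (proj_set (F i) (Xim CS Q N delta)))) / INR (fcard (F i))).
  set (S := fun i => list_sum (map (fun c => fcard (Eset CS (F i) c)) lN')).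
  assert (Hx : forall i, L - L * (INR (S i) / INR (fcard (F i))) <= x i).
  { intro i. destruct (HFfin i) as [Hfi [m Hm]].
    destruct (main_count CS Q lQ HlQ HQn q0 N delta Hpre lN' HlN' (F i) Hfi) as [_ Hc].
    fold q in Hc. fold (S i) in Hc.
    set (a := fcard (proj_set (F i) (Xim CS Q N delta))) in *.
    set (n := fcard (F i)) in *.
    assert (Hn : (0 < n)%nat).
    { destruct (@fenum_spec _ _ Hfi) as [_ [Hi Hl]]. unfold n; rewrite <- Hl.
      destruct (fenum (F i)) eqn:E; [|simpl; lia]. apply Hi in Hm. destruct Hm. }
    assert (Hqn : (q ^ n <> 0)%nat) by (apply Nat.pow_nonzero; lia).
    assert (Ha : (a <> 0)%nat) by (intro; subst a; rewrite H in Hc; simpl in Hc; lia).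
    apply le_INR in Hc. rewrite mult_INR, !pow_INR in Hc.
    assert (0 < INR q) by (apply (lt_INR 0); lia).
    assert (0 < INR a) by (apply (lt_INR 0); lia).
    assert (0 < INR n) by (apply (lt_INR 0); lia).
    apply ln_le in Hc; [|apply pow_lt; auto].
    rewrite ln_mult, !ln_pow in Hc; auto; [|apply pow_lt; auto].
    fold L in Hc. unfold x. fold a n.
    apply Rle_trans with ((INR n * L - INR (S i) * L) / INR n).
    - right. field. lra.
    - unfold Rdiv. apply Rmult_le_compat_r; [left; apply Rinv_0_lt_compat; auto|lra]. }
  assert (Hsmall := sum_small lN' (fun i c => fcard (Eset CS (F i) c)) (fun i => fcard (F i))
                   (fun c _ => HFol c)).
  assert (Hlow : forall i0, Rbar_le (Finite L) (Lub_Rbar (fun r => exists i, ds_le I i0 i /\ r = x i))).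
  { intro i0. apply rbar_ge. intros eps Heps.
    destruct (Hsmall (eps / (L + 1))) as [j Hj]; [apply Rdiv_lt_0_compat; lra|].
    destruct (ds_directed I i0 j) as [k [Hk1 Hk2]].
    exists (x k). split.
    - apply (proj1 (Lub_Rbar_correct _)). eauto.
    - specialize (Hj k Hk2). fold (S k) in Hj. specialize (Hx k).
      set (s := INR (S k) / INR (fcard (F k))) in *.
      assert (0 <= s).
      { unfold s, Rdiv. apply Rmult_le_pos; [apply pos_INR|].
        destruct (Req_dec (INR (fcard (F k))) 0) as [E|E].
        - rewrite E, Rinv_0; lra.
        - left; apply Rinv_0_lt_compat. pose proof (pos_INR (fcard (F k))); lra. }
      assert ((L + 1) * s < eps).
      { apply Rlt_le_trans with ((L + 1) * (eps / (L + 1))); [apply Rmult_lt_compat_l; lra|].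
        right; field; lra. }
      nra. }
  rewrite <- HQl in Hlt. revert Hlt. apply Rbar_le_not_lt.
  unfold entropy, net_limsup, Rbar_glb. destruct (Rbar_ex_glb _) as [g [Hg1 Hg2]]. cbn [proj1_sig].
  apply (Hg2 (Finite L)). intros y [i0 ->]. apply Hlow.
Qed.
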